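(* Let $\mathcal{P},\mathcal{S}$ be patterns, let $P\in\mathbb{R}^{n\times n}(\mathcal{P})$ be a reversible stochastic matrix with stationary distribution $\boldsymbol{\pi}$, $\hat{\boldsymbol{\pi}}=\boldsymbol{\pi}^{1/2}$ entrywise, and let \[ \mathcal{M}_{P,\boldsymbol{\pi}}=\Big\{X\in\mathbb{R}^{n\times n}_{\mathrm{exact}}(\mathcal{P}\cup\mathcal{S}) : X=X^\top,\ X\hat{\boldsymbol{\pi}}=\hat{\boldsymbol{\pi}},\ X_{ij}>0\text{ if }\{i,j\}\in\mathcal{S},\ X_{ij}=\tfrac{\hat\pi_i}{\hat\pi_j}P_{ij}\text{ if }\{i,j\}\notin\mathcal{S}\Big\}. \] Let $S\in\mathbb{R}^{n\times n}$ be given by $S_{ij}=1$ if $\{i,j\}\in\mathcal{S}$ and $S_{ij}=0$ otherwise. Then for every $X\in\mathcal{M}_{P,\boldsymbol{\pi}}$ the matrix \[ \operatorname{diag}\big((X\odot S)\boldsymbol{\pi}\big)+D_{\hat{\boldsymbol{\pi}}}(X\odot S)D_{\hat{\boldsymbol{\pi}}} \] is invertible.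
   Context: A stochastic matrix is nonnegative with row sums $1$; it is reversible if irreducible and its (unique, positive) stationary distribution $\boldsymbol{\pi}$ satisfies $\pi_iP_{ij}=\pi_jP_{ji}$ for all $i,j$. A pattern is a set of unordered pairs $\{i,j\}$, $1\le i,j\le n$, containing $\{i,i\}$ for all $i$. $\mathbb{R}^{n\times n}(\mathcal{S})$ is the set of real $n\times n$ matrices $\Delta$ with $\Delta_{ij}=\Delta_{ji}=0$ whenever $\{i,j\}\notin\mathcal{S}$; $\mathbb{R}^{n\times n}_{\mathrm{exact}}(\mathcal{S})$ is the set of real $n\times n$ matrices $\Delta$ with ($\Delta_{ij}\ne0$ and $\Delta_{ji}\ne0$) if and only if $\{i,j\}\in\mathcal{S}$. $\odot$ is the entrywise product; $\operatorname{diag}(\mathbf{v})$ and $D_{\mathbf{v}}$ both denote the diagonal matrix with diagonal $\mathbf{v}$. *)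

(* Defs.v *)
From HB Require Import structures.
From mathcomp Require Import all_boot all_order all_algebra.
From mathcomp Require Import reals.
Set Implicit Arguments. Unset Strict Implicit. Unset Printing Implicit Defensive.
Import Order.TTheory GRing.Theory Num.Theory.
Local Open Scope ring_scope.

(* A pattern on {0..n-1}: a set of unordered pairs {i,j} containing every {i,i},
   represented as a reflexive symmetric boolean relation. *)
Definition is_pattern n (S : rel 'I_n) : Prop :=
  (forall i, S i i) /\ (forall i j, S i j = S j i).

Definition pattern_union n (S1 S2 : rel 'I_n) : rel 'I_n :=
  fun i j => S1 i j || S2 i j.

Definition mx_pattern (R : realType) n (S : rel 'I_n) (D : 'M[R]_n) : Prop :=
  forall i j, ~~ S i j -> D i j = 0 /\ D j i = 0.

Definition mx_exact_pattern (R : realType) n (S : rel 'I_n) (D : 'M[R]_n) : Prop :=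
  forall i j, (D i j != 0 /\ D j i != 0) <-> S i j.

Definition stochastic (R : realType) n (P : 'M[R]_n) : Prop :=
  (forall i j, 0 <= P i j) /\ (forall i, \sum_j P i j = 1).

Definition irreducible (R : realType) n (P : 'M[R]_n) : Prop :=
  forall i j, exists k : nat, 0 < (P ^+ k) i j.

Definition stationary_distribution (R : realType) n (P : 'M[R]_n) (pi : 'rV[R]_n) : Prop :=
  (forall i, 0 <= pi ord0 i) /\ \sum_i pi ord0 i = 1 /\ pi *m P = pi.

Definition reversible_stochastic (R : realType) n (P : 'M[R]_n) (pi : 'rV[R]_n) : Prop :=
  [/\ stochastic P, irreducible P, stationary_distribution P pi &
      forall i j, pi ord0 i * P i j = pi ord0 j * P j i].

Definition sqrt_vec (R : realType) n (v : 'rV[R]_n) : 'rV[R]_n :=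
  map_mx Num.sqrt v.

Definition hadamard (R : realType) m n (A B : 'M[R]_(m, n)) : 'M[R]_(m, n) :=
  map2_mx *%R A B.

Definition pattern_mx (R : realType) n (S : rel 'I_n) : 'M[R]_n :=
  \matrix_(i, j) (S i j)%:R.

Definition M_set (R : realType) n (PP SS : rel 'I_n) (P : 'M[R]_n) (pi : 'rV[R]_n)
    (X : 'M[R]_n) : Prop :=
  let pih := sqrt_vec pi in
  [/\ mx_exact_pattern (pattern_union PP SS) X,
      X = X^T,
      X *m pih^T = pih^T,
      (forall i j, SS i j -> 0 < X i j) &
      (forall i j, ~~ SS i j -> X i j = pih ord0 i / pih ord0 j * P i j)].

(* Main.v *)
Require Import Defs.
From HB Require Import structures.
From mathcomp Require Import all_boot all_order all_algebra.
From mathcomp Require Import reals ring lra.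
Set Implicit Arguments. Unset Strict Implicit. Unset Printing Implicit Defensive.
Import Order.TTheory GRing.Theory Num.Theory.
Local Open Scope ring_scope.

Lemma core (R : realFieldType) n (Y : 'M[R]_n) (p q : 'rV[R]_n) :
  (forall i j, Y i j = Y j i) -> (forall i j, 0 <= Y i j) -> (forall i, 0 < Y i i) ->
  (forall i, 0 < q 0 i) -> (forall i, p 0 i = q 0 i ^+ 2) ->
  diag_mx (Y *m p^T)^T + diag_mx q *m Y *m diag_mx q \in unitmx.
Proof.
move=> Ysym Y0 Ypos qpos pq.
rewrite unitmxE unitfE; apply/det0P => -[v v0 vA].
have key : forall j, \sum_i v 0 i * ((i == j)%:R * (\sum_k Y i k * p 0 k) + q 0 i * Y i j * q 0 j) = 0.
  move=> j; transitivity ((v *m (diag_mx (Y *m p^T)^T + diag_mx q *m Y *m diag_mx q)) 0 j); last by rewrite vA mxE.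
  rewrite mxE; apply: eq_bigr => i _; rewrite mul_mx_diag mul_diag_mx !mxE; congr (_ * (_ + _)).
  rewrite mulr_natl; congr (_ *+ _); by apply: eq_bigr => k _; rewrite !mxE.
have S0 : \sum_j \sum_i v 0 j * (v 0 i * ((i == j)%:R * (\sum_k Y i k * p 0 k) + q 0 i * Y i j * q 0 j)) = 0.
  by apply: big1 => j _; rewrite -mulr_sumr key mulr0.
pose T i j := Y i j * (q 0 j * v 0 i + q 0 i * v 0 j) ^+ 2.
have ST : \sum_i \sum_j T i j = 0.
  have -> : \sum_i \sum_j T i j = \sum_i \sum_j (Y i j * (p 0 j * v 0 i ^+2) + Y i j * (p 0 i * v 0 j ^+ 2)
        + 2 * (Y i j * q 0 i * q 0 j * v 0 i * v 0 j)).
    apply: eq_bigr => i _; apply: eq_bigr => j _; rewrite /T !pq; ring.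
  move: S0; set s0 := (X in X = 0) => S0.
  transitivity (2 * s0); last by rewrite S0 mulr0.
  rewrite /s0.
  under eq_bigr => i _ do rewrite big_split /= big_split /=.
  rewrite big_split /= big_split /=.
  have -> : \sum_i \sum_j Y i j * (p 0 i * v 0 j ^+ 2)
      = \sum_i \sum_j Y i j * (p 0 j * v 0 i ^+2).
    rewrite exchange_big /=; apply: eq_bigr => i _; apply: eq_bigr => j _; by rewrite Ysym.
  have -> : \sum_i \sum_j 2 * (Y i j * q 0 i * q 0 j * v 0 i * v 0 j)
     = 2 * (\sum_i \sum_j Y i j * q 0 i * q 0 j * v 0 i * v 0 j).
    by rewrite mulr_sumr; apply: eq_bigr => i _; rewrite mulr_sumr.
  rewrite -mulr2n -[_ *+ 2]mulr_natl -mulrDr; congr (_ * _).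
  rewrite [RHS]exchange_big /=.
  rewrite -big_split /=; apply: eq_bigr => i _.
  rewrite [RHS](eq_bigr (fun j => v 0 j * (v 0 i * ((i == j)%:R * \sum_k Y i k * p 0 k)) +
       Y i j * q 0 i * q 0 j * v 0 i * v 0 j)); last by move=> j _; ring.
  rewrite big_split /=; congr (_ + _).
    rewrite [RHS](bigD1 i) //= eqxx.
    have -> : \sum_(j | j != i) v 0 j * (v 0 i * ((i == j)%:R * \sum_k Y i k * p 0 k)) = 0.
      by apply: big1 => j ji; rewrite eq_sym (negbTE ji) /= mul0r !mulr0.
    rewrite addr0 /= mul1r mulrA -expr2 mulr_sumr; apply: eq_bigr => k _; ring.
have T0 : forall i j, 0 <= T i j by move=> i j; rewrite /T mulr_ge0 // sqr_ge0.
apply/negP: v0; rewrite negbK; apply/eqP/rowP => i; rewrite mxE.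
have : T i i == 0.
  move/eqP: ST; rewrite psumr_eq0 => [/allP/(_ i (mem_index_enum _)) /=|i' _]; last by rewrite sumr_ge0.
  by rewrite psumr_eq0 // => /allP/(_ i (mem_index_enum _)).
rewrite /T mulf_eq0 (gt_eqF (Ypos i)) /= sqrf_eq0.
have -> : q 0 i * v 0 i + q 0 i * v 0 i = 2 * (q 0 i * v 0 i) by ring.
by rewrite !mulf_eq0 pnatr_eq0 /= (gt_eqF (qpos i)) /= => /eqP.
Qed.

Lemma pi_pos (R : realType) n (P : 'M[R]_n) (pi : 'rV[R]_n) :
  stochastic P -> irreducible P -> stationary_distribution P pi -> forall i, 0 < pi 0 i.
Proof.
move=> [P0 _] Pirr [pi0 [pi1 piP]] i.
have Pk0 : forall k i j, 0 <= (P ^+ k) i j.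
  elim=> [|k IH] a b; first by rewrite expr0 -[1]/(1%:M) mxE ler0n.
  by rewrite exprS -mulmxE mxE sumr_ge0 // => l _; rewrite mulr_ge0.
have piPk : forall k, pi *m P ^+ k = pi.
  elim=> [|k IH]; first by rewrite expr0 -[1]/(1%:M) mulmx1.
  by rewrite exprSr -mulmxE mulmxA IH.
case: (pickP (fun j => 0 < pi 0 j)) => [j Hj|H]; last first.
  have : \sum_i pi 0 i = 0.
    apply: big1 => l _; have := H l; have := pi0 l; rewrite le_eqVlt => /orP[/eqP <- //|-> //].
  by rewrite pi1 => /eqP; rewrite oner_eq0.
have [k Hk] := Pirr j i.
rewrite -(piPk k) mxE (bigD1 j) //=.
have := mulr_gt0 Hj Hk.
have : 0 <= \sum_(l | l != j) pi 0 l * (P ^+ k) l i by apply: sumr_ge0 => l _; rewrite mulr_ge0.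
lra.
Qed.

Theorem proposition4p7 (R : realType) (n : nat) (PP SS : rel 'I_n)
    (P : 'M[R]_n) (pi : 'rV[R]_n) :
  is_pattern PP -> is_pattern SS ->
  mx_pattern PP P ->
  reversible_stochastic P pi ->
  forall X : 'M[R]_n, M_set PP SS P pi X ->
  let XS := hadamard X (pattern_mx R SS) in
  diag_mx (XS *m pi^T)^T + diag_mx (sqrt_vec pi) *m XS *m diag_mx (sqrt_vec pi)
    \in unitmx.
Proof.
move=> _ [SSr SSs] _ [Pst Pirr Pstat _] X HM.
set XS := hadamard X (pattern_mx R SS).
change (diag_mx (XS *m pi^T)^T + diag_mx (sqrt_vec pi) *m XS *m diag_mx (sqrt_vec pi) \in unitmx).
move: HM; rewrite /M_set => -[_ XT _ Xpos _].
have pipos := pi_pos Pst Pirr Pstat.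
have XSE : forall i j, XS i j = X i j * (SS i j)%:R by move=> i j; rewrite /XS /hadamard !mxE.
have Xsym : forall i j, X i j = X j i.
  by move=> i j; rewrite [in LHS]XT mxE.
apply: core.
- by move=> i j; rewrite !XSE Xsym SSs.
- move=> i j; rewrite XSE; case: (boolP (SS i j)) => h; last by rewrite mulr0.
  by rewrite mulr1 ltW // Xpos.
- by move=> i; rewrite XSE SSr mulr1 Xpos.
- by move=> i; rewrite /sqrt_vec mxE sqrtr_gt0.
- by move=> i; rewrite /sqrt_vec mxE sqr_sqrtr // ltW.
Qed.
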